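(* Let $R$ be a finite commutative principal ideal ring with unity. Suppose that $R$ has exactly two associated prime ideals $p_1,p_2$ (i.e. $\lvert \operatorname{Ass}(R)\rvert=2$) and that $p_1\cap p_2=\{0\}$. Then the zero divisor graph $\Gamma(R)$ is a divisor graph.
   Context: $\operatorname{Ass}(R)$ is the set of associated primes of $R$ as an $R$-module, i.e. prime ideals of $R$ of the form $\operatorname{ann}(x)$ for some nonzero $x\in R$. The zero divisor graph $\Gamma(R)$ is the simple graph whose vertex set is the set of nonzero zero divisors of $R$, distinct $a,b$ adjacent iff $ab=0$. For a nonempty set $T$ of positive integers, the divisor graph $G(T)$ has vertex set $T$, with distinct $i,j$ adjacent iff $i\mid j$ or $j\mid i$; a graph is a divisor graph if it is isomorphic to some $G(T)$. *)

(* Defs.v *)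
From HB Require Import structures.
From mathcomp Require Import all_boot all_order all_algebra.
Set Implicit Arguments. Unset Strict Implicit. Unset Printing Implicit Defensive.
Import GRing.Theory.
Local Open Scope ring_scope.

Section RingDefs.
Variable R : finComNzRingType.

Definition is_ideal (I : {set R}) : bool :=
  [&& 0 \in I,
      [forall x in I, forall y in I, x + y \in I],
      [forall x in I, - x \in I] &
      [forall r, forall x in I, r * x \in I]].

Definition principal_ideal (a : R) : {set R} := [set a * r | r : R].

Definition is_PIR : Prop :=
  forall I : {set R}, is_ideal I -> exists a : R, I = principal_ideal a.

Definition is_prime_ideal (P : {set R}) : bool :=
  [&& is_ideal P, P != setT &
      [forall a, forall b, (a * b \in P) ==> (a \in P) || (b \in P)]].

Definition ann (x : R) : {set R} := [set y | y * x == 0].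

Definition Ass : {set {set R}} :=
  [set P | is_prime_ideal P && [exists x, (x != 0) && (P == ann x)]].

Definition zdiv_vertex (a : R) : bool :=
  (a != 0) && [exists b, (b != 0) && (a * b == 0)].

(* adjacency in the zero divisor graph (on distinct vertices) *)
Definition zd_adj (a b : R) : bool := a * b == 0.

End RingDefs.

(* A graph with vertex set V (a predicate on a finite type T) and adjacency e
   is a divisor graph if it is isomorphic to G(S) for some nonempty set S of
   positive integers: there is an injection f of V into positive integers such
   that distinct u, v are adjacent iff f u | f v or f v | f u.  The image f(V)
   is the set S. *)
Definition is_divisor_graph (T : finType) (V : pred T) (e : rel T) : Prop :=
  (exists v, V v) /\
  exists f : T -> nat,
    [/\ {in V &, injective f},
        {in V, forall v, (0 < f v)%N} &
        {in V &, forall u v, u != v -> e u v = ((f u %| f v) || (f v %| f u))%N}].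

(* Main.v *)
Require Import Defs.
From HB Require Import structures.
From mathcomp Require Import all_boot all_order all_algebra.
From mathcomp Require Import zify.
Local Open Scope ring_scope.
Import GRing.Theory.

Section Aux.
Set Implicit Arguments. Unset Strict Implicit.
Variable R : finComNzRingType.

Lemma ideal_mul (I : {set R}) r x : is_ideal I -> x \in I -> r * x \in I.
Proof. by case/and4P => _ _ _ /forallP H Hx; move/forall_inP: (H r) => /(_ x Hx). Qed.

Lemma ideal0 (I : {set R}) : is_ideal I -> 0 \in I.
Proof. by case/and4P. Qed.

Lemma prime_mul (P : {set R}) a b : is_prime_ideal P -> a*b \in P -> (a \in P) || (b \in P).
Proof. by case/and3P => _ _ /forallP H; move: (H a) => /forallP /(_ b) /implyP. Qed.

Lemma prime_ideal (P : {set R}) : is_prime_ideal P -> is_ideal P.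
Proof. by case/and3P. Qed.

Lemma ann_prime (a y : R) : y != 0 -> a * y == 0 ->
  (forall z, z != 0 -> a * z == 0 -> (#|ann z| <= #|ann y|)%N) -> is_prime_ideal (ann y).
Proof.
move=> y0 ay Hmax; apply/and3P; split.
- apply/and4P; split.
  + by rewrite inE mul0r.
  + apply/forall_inP => x; rewrite inE => /eqP hx; apply/forall_inP => z; rewrite inE => /eqP hz.
    by rewrite inE mulrDl hx hz addr0.
  + by apply/forall_inP => x; rewrite !inE mulNr => /eqP ->; rewrite oppr0.
  + apply/forallP => r; apply/forall_inP => x; rewrite !inE => /eqP hx.
    by rewrite -mulrA hx mulr0.
- apply/negP => /eqP HT.
  have : (1 : R) \in ann y by rewrite HT inE.
  by rewrite inE mul1r (negbTE y0).
- apply/forallP => r; apply/forallP => s; apply/implyP; rewrite !inE => hrs.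
  case: (boolP (r * y == 0)) => //= ry.
  have sub : ann y \subset ann (r * y).
    apply/subsetP => z; rewrite !inE => /eqP hz.
    by rewrite mulrA (mulrC z r) -mulrA hz mulr0.
  have ary : a * (r * y) == 0 by rewrite mulrA (mulrC a r) -mulrA (eqP ay) mulr0.
  have /eqP E : ann y == ann (r * y).
    by rewrite eqEcard sub Hmax.
  have : s \in ann (r * y) by rewrite inE mulrA (mulrC s r) (eqP hrs).
  by rewrite -E inE.
Qed.

Lemma zdiv_Ass (a b : R) : b != 0 -> a * b = 0 -> exists2 P, P \in Ass R & a \in P.
Proof.
move=> b0 ab.
have Pb : (b != 0) && (a * b == 0) by rewrite b0 ab eqxx.
case: (@arg_maxnP R b (fun y => (y != 0) && (a * y == 0)) (fun y => #|ann y|) Pb) => y /andP [y0 ay] Hmax.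
have Hp : is_prime_ideal (ann y).
  apply: (ann_prime y0 ay) => z z0 az; apply: Hmax; by rewrite z0 az.
exists (ann y); last by rewrite inE.
rewrite inE Hp /=; apply/existsP; exists y; by rewrite y0 eqxx.
Qed.

End Aux.

Lemma antichain (N x y : nat) : (N < x <= 2 * N)%N -> (N < y <= 2 * N)%N -> (x %| y)%N -> x = y.
Proof.
move=> /andP [h1 h2] /andP [h3 h4] /dvdnP [k hk]; subst y.
case: k h3 h4 => [|[|k]] h3 h4; [by []| by rewrite mul1n | nia].
Qed.

Lemma mixaux (N i c t : nat) : (i < N -> 2 * N <= c -> 0 < c -> c * 2 <= t -> N + 1 + i < t)%N.
Proof. lia. Qed.

Theorem theorem2p7 (R : finComNzRingType) (p1 p2 : {set R}) :
  is_PIR R ->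
  p1 != p2 ->
  Ass R = [set p1; p2] ->
  p1 :&: p2 = [set 0] ->
  is_divisor_graph (@zdiv_vertex R) (@zd_adj R).
Proof.
move=> _ Hne HAss Hcap.
have AssP P : P \in Ass R -> is_prime_ideal P /\ exists2 x, x != 0 & P = ann x.
  rewrite inE => /andP [Hp /existsP [x /andP [x0 /eqP Px]]]; split => //; by exists x.
have [Pp1 [x1 x10 E1]] : is_prime_ideal p1 /\ exists2 x, x != 0 & p1 = ann x.
  by apply: AssP; rewrite HAss !inE eqxx.
have [Pp2 [x2 x20 E2]] : is_prime_ideal p2 /\ exists2 x, x != 0 & p2 = ann x.
  by apply: AssP; rewrite HAss !inE eqxx orbT.
have cap a : a \in p1 -> a \in p2 -> a = 0.
  move=> h1 h2; have : a \in p1 :&: p2 by rewrite inE h1 h2.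
  by rewrite Hcap inE => /eqP.
have I1 := prime_ideal Pp1.
have I2 := prime_ideal Pp2.
have mixed a b : a \in p1 -> b \in p2 -> a * b = 0.
  move=> ha hb; apply: cap; last exact: ideal_mul.
  by rewrite mulrC; apply: ideal_mul.
have same1 a b : a \in p1 -> b \in p1 -> a != 0 -> b != 0 -> a * b != 0.
  move=> ha hb a0 b0; apply/eqP => ab.
  have : (a * b) \in p2 by rewrite ab ideal0.
  case/(prime_mul Pp2)/orP => h.
  - by move: a0; rewrite (cap a ha h) eqxx.
  - by move: b0; rewrite (cap b hb h) eqxx.
have same2 a b : a \in p2 -> b \in p2 -> a != 0 -> b != 0 -> a * b != 0.
  move=> ha hb a0 b0; apply/eqP => ab.
  have : (a * b) \in p1 by rewrite ab ideal0.
  case/(prime_mul Pp1)/orP => h.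
  - by move: a0; rewrite (cap a h ha) eqxx.
  - by move: b0; rewrite (cap b h hb) eqxx.
have Vchar v : zdiv_vertex v = (v != 0) && ((v \in p1) || (v \in p2)).
  apply/idP/idP.
  - case/andP => v0 /existsP [b /andP [b0 /eqP vb]]; rewrite v0 /=.
    case: (zdiv_Ass b0 vb) => P; rewrite HAss !inE => /orP [] /eqP -> ->; by rewrite ?orbT.
  - case/andP => v0 /orP [] h; rewrite /zdiv_vertex v0 /=; apply/existsP.
    + by exists x1; rewrite x10 /=; move: h; rewrite E1 inE.
    + by exists x2; rewrite x20 /=; move: h; rewrite E2 inE.
split.
  case: (boolP [exists v, (v != 0) && (v \in p1)]).
    by case/existsP => v /andP [v0 h]; exists v; rewrite Vchar v0 h.
  rewrite negb_exists => /forallP H1.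
  have H1' v : v \in p1 -> v = 0.
    by move=> h; move: (H1 v); rewrite h andbT negbK => /eqP.
  exfalso; move/negP: Hne; apply; apply/eqP/setP => z.
  apply/idP/idP => h.
  - by rewrite (H1' z h) ideal0.
  - have : z * x2 \in p1 by move: h; rewrite E2 inE => /eqP ->; rewrite ideal0.
    case/(prime_mul Pp1)/orP => h'; first by [].
    by move: x20; rewrite (H1' x2 h') eqxx.
pose N := #|R|.
pose idx (v : R) := nat_of_ord (enum_rank v).
have idxlt v : (idx v < N)%N by rewrite /idx /N; case: (enum_rank v) => /= i; rewrite cardE.
have idxinj u v : idx u = idx v -> u = v by move=> h; apply: enum_rank_inj; apply: val_inj.
pose c := (2 * N)`!.
pose f (v : R) := if v \in p1 then (N + 1 + idx v)%N else (c * (N + 1 + idx v))%N.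
have cge : (2 * N <= c)%N.
  apply: dvdn_leq; first exact: fact_gt0.
  apply: dvdn_fact; have := idxlt 0; lia.
have c0 : (0 < c)%N := fact_gt0 _.
have dx u v : (N + 1 + idx u %| c * (N + 1 + idx v))%N.
  apply: dvdn_mulr; apply: dvdn_fact; have := idxlt u; lia.
have ach u v : (N + 1 + idx u %| N + 1 + idx v)%N -> u = v.
  move=> h; apply: idxinj.
  have := antichain (N := N) _ _ h; have := idxlt u; have := idxlt v.
  move=> h1 h2 h3; suff : (N + 1 + idx u)%N = (N + 1 + idx v)%N by lia.
  apply: h3; apply/andP; split; lia.
have mixbig u v : (N + 1 + idx u < c * (N + 1 + idx v))%N.
  have h : (c * 2 <= c * (N + 1 + idx v))%N by rewrite leq_pmul2l //; have := idxlt v; lia.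
  exact: (mixaux (idxlt u) cge c0 h).
exists f; split.
- move=> u v; rewrite -!topredE /= !Vchar => /andP [u0 hu] /andP [v0 hv]; rewrite /f.
  case: (boolP (u \in p1)) => hu1; case: (boolP (v \in p1)) => hv1 E.
  + by apply: ach; rewrite E.
  + by move: (mixbig u v); rewrite E ltnn.
  + by move: (mixbig v u); rewrite -E ltnn.
  + by apply: ach; rewrite -(dvdn_pmul2l c0) E.
- move=> v _; rewrite /f; case: ifP => _; first lia.
  by rewrite muln_gt0 c0 /=; lia.
- move=> u v; rewrite -!topredE /= !Vchar => /andP [u0 hu] /andP [v0 hv] uv; rewrite /f /zd_adj.
  case: (boolP (u \in p1)) => hu1; case: (boolP (v \in p1)) => hv1.
  + rewrite (negbTE (same1 _ _ hu1 hv1 u0 v0)); symmetry; apply/negP => /orP [] h.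
    * by move/eqP: uv; apply; apply: ach.
    * by move/eqP: uv; apply; symmetry; apply: ach.
  + have hv2 : v \in p2 by move: hv; rewrite (negbTE hv1).
    by rewrite mixed // eqxx dx.
  + have hu2 : u \in p2 by move: hu; rewrite (negbTE hu1).
    by rewrite mulrC mixed // eqxx dx orbT.
  + have hu2 : u \in p2 by move: hu; rewrite (negbTE hu1).
    have hv2 : v \in p2 by move: hv; rewrite (negbTE hv1).
    rewrite (negbTE (same2 _ _ hu2 hv2 u0 v0)) !(dvdn_pmul2l c0); symmetry; apply/negP => /orP [] h.
    * by move/eqP: uv; apply; apply: ach.
    * by move/eqP: uv; apply; symmetry; apply: ach.
Qed.
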